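(* Let $H$ be a graph that is not a trivial pattern. Then the triangle $K_3$ is a projection of $H$.
   Context: A graph $H$ is a trivial pattern if, after removing its isolated vertices, it is either a complete bipartite graph or has at most two edges. A graph $H'$ is a projection of $H$ if $H'$ can be obtained from $H$ by a sequence of vertex deletions and identifications of two nonadjacent vertices. *)

(* Defs.v *)
(* Finite simple graphs inside an ambient finite type T:
   a graph is a vertex set V : {set T} and an edge set E : {set {set T}},
   each edge a 2-element subset of V. *)
From mathcomp Require Import all_boot.
Set Implicit Arguments. Unset Strict Implicit. Unset Printing Implicit Defensive.

Record sgraph (T : finType) := SGraph { verts : {set T}; edges : {set {set T}} }.

Definition wf_graph (T : finType) (G : sgraph T) : Prop :=
  forall e, e \in edges G -> #|e| = 2 /\ e \subset verts G.

Definition adjacent (T : finType) (G : sgraph T) (x y : T) : bool :=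
  [set x; y] \in edges G.

Definition del_vertex (T : finType) (G : sgraph T) (v : T) : sgraph T :=
  SGraph (verts G :\ v) [set e in edges G | v \notin e].

Definition identify (T : finType) (G : sgraph T) (u v : T) : sgraph T :=
  SGraph (verts G :\ v)
    ([set e in edges G | v \notin e] :|:
     [set [set u; w] | w in verts G & adjacent G v w]).

Inductive proj_step (T : finType) (G : sgraph T) : sgraph T -> Prop :=
| PS_del v : v \in verts G -> proj_step G (del_vertex G v)
| PS_ident u v : u \in verts G -> v \in verts G -> u != v ->
    ~~ adjacent G u v -> proj_step G (identify G u v).

Inductive projection (T : finType) (G : sgraph T) : sgraph T -> Prop :=
| Proj_refl : projection G G
| Proj_step G1 G2 : projection G G1 -> proj_step G1 G2 -> projection G G2.

Definition is_triangle (T : finType) (G : sgraph T) : Prop :=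
  exists a b c : T, [/\ a != b, b != c, a != c,
    verts G = [set a; b; c] &
    edges G = [set [set a; b]; [set b; c]; [set a; c]]].

Definition nonisolated (T : finType) (G : sgraph T) : {set T} :=
  [set x in verts G | [exists e in edges G, x \in e]].

Definition complete_bipartite_mod_isolated (T : finType) (G : sgraph T) : Prop :=
  exists A B : {set T}, [/\ [disjoint A & B], A :|: B = nonisolated G &
    edges G = [set [set a; b] | a in A, b in B]].

Definition trivial_pattern (T : finType) (G : sgraph T) : Prop :=
  complete_bipartite_mod_isolated G \/ #|edges G| <= 2.

(* Main.v *)
Require Import Defs.
From mathcomp Require Import all_boot.
From Stdlib Require Import Classical.
Set Implicit Arguments. Unset Strict Implicit. Unset Printing Implicit Defensive.

Lemma set2C (T : finType) (x y : T) : [set x; y] = [set y; x].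
Proof. by rewrite setUC. Qed.

Lemma adjC (T : finType) (G : sgraph T) x y : adjacent G x y = adjacent G y x.
Proof. by rewrite /adjacent set2C. Qed.

Lemma adjE (T : finType) (G : sgraph T) x y : wf_graph G -> adjacent G x y ->
  [/\ x != y, x \in verts G & y \in verts G].
Proof.
move=> wf /wf [c2 sub]; split.
- by move: c2; rewrite cards2; case: (x != y).
- by apply: (subsetP sub); rewrite !inE eqxx.
- by apply: (subsetP sub); rewrite !inE eqxx orbT.
Qed.

Lemma edgeE (T : finType) (G : sgraph T) e : wf_graph G -> e \in edges G ->
  exists x y, e = [set x; y] /\ adjacent G x y.
Proof.
move=> wf he; have [c2 _] := wf e he.
have /cards2P [x [y [_ ex]]] : #|e| == 2 by rewrite c2.
by exists x, y; split => //; rewrite /adjacent -ex.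
Qed.

Lemma proj_trans (T : finType) (G1 G2 G3 : sgraph T) :
  projection G1 G2 -> projection G2 G3 -> projection G1 G3.
Proof.
move=> p12 p23; elim: p23 => // G G' _ IH st; exact: Proj_step IH st.
Qed.

Lemma step_proj (T : finType) (G1 G2 : sgraph T) : proj_step G1 G2 -> projection G1 G2.
Proof. by move=> st; apply: Proj_step (Proj_refl _) st. Qed.

Lemma step_wf (T : finType) (G1 G2 : sgraph T) : wf_graph G1 -> proj_step G1 G2 -> wf_graph G2.
Proof.
move=> wf []; clear G2.
- move=> v vV e; rewrite /= inE => /andP [he ve]; have [c2 sub] := wf e he.
  split=> //; apply/subsetP => x xe; rewrite !inE (subsetP sub) // andbT.
  by apply: contraNneq ve => <-.
- move=> u v uV vV uv nuv e; rewrite /= !inE => /orP [/andP [he ve]|].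
    have [c2 sub] := wf e he; split=> //; apply/subsetP => x xe.
    by rewrite !inE (subsetP sub) // andbT; apply: contraNneq ve => <-.
  case/imsetP => w; rewrite inE => /andP [wV vw] ->.
  have [vw' _ _] := adjE wf vw.
  have uw : u != w by apply: contraNneq nuv => ->; rewrite adjC.
  split; first by rewrite cards2 uw.
  apply/subsetP => x; rewrite !inE => /orP [] /eqP ->; rewrite ?uV ?wV andbT //.
  by rewrite eq_sym.
Qed.
Lemma id_keep (T : finType) (G : sgraph T) u v x y :
  adjacent G x y -> x != v -> y != v -> adjacent (identify G u v) x y.
Proof.
move=> h xv yv; rewrite /adjacent /=; apply/setUP; left.
by rewrite inE -/(adjacent G x y) h !inE negb_or ![v == _]eq_sym xv yv.
Qed.

Lemma id_new (T : finType) (G : sgraph T) u v w :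
  w \in verts G -> adjacent G v w -> adjacent (identify G u v) u w.
Proof.
move=> wV vw; rewrite /adjacent /=; apply/setUP; right.
by apply/imsetP; exists w => //; rewrite inE wV.
Qed.

Lemma id_back (T : finType) (G : sgraph T) u v x y :
  x != u -> y != u -> adjacent (identify G u v) x y -> adjacent G x y.
Proof.
move=> xu yu; rewrite /adjacent /= => /setUP [|]; first by rewrite inE => /andP [].
case/imsetP => w _ e.
have : u \in [set x; y] by rewrite e !inE eqxx.
by rewrite !inE ![u == _]eq_sym (negbTE xu) (negbTE yu).
Qed.

Lemma id_verts (T : finType) (G : sgraph T) u v x :
  x \in verts G -> x != v -> x \in verts (identify G u v).
Proof. by move=> xV xv; rewrite /= !inE xV xv. Qed.

Definition K3 (T : finType) (G : sgraph T) :=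
  exists H', projection G H' /\ is_triangle H'.

Lemma K3_step (T : finType) (G G1 : sgraph T) : proj_step G G1 -> K3 G1 -> K3 G.
Proof.
move=> st [H' [p t]]; exists H'; split=> //.
exact: proj_trans (step_proj st) p.
Qed.

Lemma tri_exact (T : finType) (G : sgraph T) a b c : wf_graph G ->
  verts G = [set a; b; c] -> adjacent G a b -> adjacent G b c -> adjacent G a c ->
  is_triangle G.
Proof.
move=> wf eV ab bc ac.
have [nab _ _] := adjE wf ab; have [nbc _ _] := adjE wf bc; have [nac _ _] := adjE wf ac.
exists a, b, c; split=> //; apply/setP => e; apply/idP/idP.
- move=> he; have [p [q [-> pq]]] := edgeE wf he.
  have [npq pV qV] := adjE wf pq.
  move: pV qV npq; rewrite eV !inE.
  by move=> /orP [/orP [] |] /eqP -> /orP [/orP [] |] /eqP -> npq;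
    first [by rewrite eqxx in npq |
      by rewrite ?(set2C b a) ?(set2C c b) ?(set2C c a) !eqxx ?orbT].
- by rewrite !inE => /orP [/orP [] |] /eqP ->.
Qed.

Lemma restrict (T : finType) (n : nat) (G : sgraph T) a b c : wf_graph G ->
  #|verts G :\: [set a; b; c]| = n ->
  adjacent G a b -> adjacent G b c -> adjacent G a c -> K3 G.
Proof.
elim: n G => [|n IH] G wf cn ab bc ac.
- exists G; split; first exact: Proj_refl.
  apply: (tri_exact wf _ ab bc ac).
  have [_ aV bV] := adjE wf ab; have [_ _ cV] := adjE wf bc.
  apply/eqP; rewrite eqEsubset; apply/andP; split.
    by rewrite -setD_eq0 -cards_eq0 cn.
  by apply/subsetP => x; rewrite !inE => /orP [/orP [] |] /eqP ->.
- have : verts G :\: [set a; b; c] != set0 by rewrite -cards_eq0 cn.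
  case/set0Pn => v hv; move: (hv); rewrite inE => /andP [vS vV].
  move: vS; rewrite !inE !negb_or => /andP [/andP [va vb] vc].
  have st := PS_del vV.
  apply: (K3_step st); apply: (IH _ (step_wf wf st)).
  + have := cardsD1 v (verts G :\: [set a; b; c]).
    rewrite cn hv add1n => -[->].
    by apply: eq_card => x; rewrite !inE; case: (x == v); rewrite ?andbF.
  + by rewrite /adjacent /= inE -/(adjacent G a b) ab !inE negb_or va vb.
  + by rewrite /adjacent /= inE -/(adjacent G b c) bc !inE negb_or vc vb.
  + by rewrite /adjacent /= inE -/(adjacent G a c) ac !inE negb_or va vc.
Qed.

Lemma fin (T : finType) (G : sgraph T) a b c : wf_graph G ->
  adjacent G a b -> adjacent G b c -> adjacent G a c -> K3 G.
Proof. by move=> wf; apply: (@restrict T _ G a b c wf erefl). Qed.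

Lemma L4 (T : finType) (G : sgraph T) a b c d : wf_graph G ->
  adjacent G a b -> adjacent G b c -> adjacent G c d -> a != d ->
  ~~ adjacent G a d -> K3 G.
Proof.
move=> wf ab bc cd ad nad.
have [_ aV _] := adjE wf ab; have [ncd cV dV] := adjE wf cd.
have bd : b != d by apply: contraNneq nad => <-.
have st := PS_ident aV dV ad nad.
apply: (K3_step st); apply: (@fin _ _ a b c (step_wf wf st)).
- exact: id_keep.
- exact: id_keep.
- by apply: id_new => //; rewrite adjC.
Qed.

Lemma L5 (T : finType) (G : sgraph T) a b c d e : wf_graph G ->
  adjacent G a b -> adjacent G b c -> adjacent G d e ->
  ~~ adjacent G c d -> ~~ adjacent G a e ->
  a != d -> b != d -> a != c -> c != e -> a != e -> c != d -> K3 G.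
Proof.
move=> wf ab bc de ncd nae ad bd ac ce ae cd.
have [nbc _ cV] := adjE wf bc; have [dne dV eV] := adjE wf de.
have st := PS_ident cV dV cd ncd.
apply: (K3_step st); apply: (@L4 _ _ a b c e (step_wf wf st)) => //.
- exact: id_keep.
- exact: id_keep.
- exact: id_new.
- by apply: contra nae; apply: id_back => //; rewrite eq_sym.
Qed.

Lemma L6 (T : finType) (G : sgraph T) a b c d e f : wf_graph G ->
  adjacent G a b -> adjacent G c d -> adjacent G e f ->
  ~~ adjacent G b c -> ~~ adjacent G d e -> ~~ adjacent G a f ->
  b != c -> a != c -> e != c -> f != c -> d != b -> e != b -> f != b ->
  a != e -> b != e -> a != d -> d != f -> a != f -> d != e -> K3 G.
Proof.
move=> wf ab cd ef nbc nde naf bc ac ec fc db eb fb ae be ad df af de.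
have [nab aV bV] := adjE wf ab; have [ncd cV dV] := adjE wf cd.
have st := PS_ident bV cV bc nbc.
apply: (K3_step st); apply: (@L5 _ _ a b d e f (step_wf wf st)) => //.
- exact: id_keep.
- exact: id_new.
- exact: id_keep.
- by apply: contra nde; apply: id_back.
- by apply: contra naf; apply: id_back.
Qed.

Lemma C2x (T : finType) (G : sgraph T) x y z w q : wf_graph G ->
  adjacent G x y -> adjacent G z w ->
  ~~ adjacent G x z -> ~~ adjacent G x w -> ~~ adjacent G y z -> ~~ adjacent G y w ->
  x != z -> x != w -> y != z -> y != w ->
  adjacent G x q -> q != x -> q != y -> q != z -> q != w -> K3 G.
Proof.
move=> wf xy zw nxz nxw nyz nyw xz xw yz yw xq qx qy qz qw.
case: (boolP (adjacent G q z)) => qzA.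
- by apply: (@L4 _ _ y x q z wf) => //; rewrite adjC.
- apply: (@L5 _ _ y x q z w wf) => //; first by rewrite adjC.
  all: by rewrite eq_sym.
Qed.

Lemma M2 (T : finType) (G : sgraph T) x y z w e : wf_graph G ->
  adjacent G x y -> adjacent G z w ->
  ~~ adjacent G x z -> ~~ adjacent G x w -> ~~ adjacent G y z -> ~~ adjacent G y w ->
  x != z -> x != w -> y != z -> y != w ->
  e \in edges G -> e != [set x; y] -> e != [set z; w] -> K3 G.
Proof.
move=> wf xy zw nxz nxw nyz nyw xz xw yz yw he e1 e2.
have [nxy _ _] := adjE wf xy; have [nzw _ _] := adjE wf zw.
have NC : forall a b, adjacent G a b -> a \in [set x; y] -> b \in [set z; w] -> False.
  by move=> a b ab; rewrite !inE => /orP [] /eqP ? /orP [] /eqP ?; subst a b;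
    [case/negP: nxz | case/negP: nxw | case/negP: nyz | case/negP: nyw].
have C2 : forall s r, s \in [set x; y; z; w] -> r \notin [set x; y; z; w] ->
    adjacent G s r -> K3 G.
  move=> s r; rewrite !inE !negb_or => sS /andP [/andP [/andP [rx ry] rz] rw] sr.
  move: sS => /orP [/orP [/orP []|]|] /eqP ?; subst s.
  - exact: (@C2x _ _ x y z w r wf).
  - by apply: (@C2x _ _ y x z w r wf) => //; rewrite adjC.
  - apply: (@C2x _ _ z w x y r wf) => //; rewrite 1?adjC 1?eq_sym //.
  - apply: (@C2x _ _ w z x y r wf) => //; rewrite 1?adjC 1?eq_sym //.
have [p [q [ee pq]]] := edgeE wf he; subst e.
case: (boolP (p \in [set x; y; z; w])) => pS; case: (boolP (q \in [set x; y; z; w])) => qS.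
- have [npq _ _] := adjE wf pq.
  move: pS qS npq pq e1 e2; rewrite !inE.
  move=> /orP [/orP [/orP []|]|] /eqP -> /orP [/orP [/orP []|]|] /eqP -> npq h n1 n2;
    first [ by rewrite eqxx in npq
      | by rewrite eqxx in n1 | by rewrite set2C eqxx in n1
      | by rewrite eqxx in n2 | by rewrite set2C eqxx in n2
      | by move: h; rewrite ?[adjacent G _ x]adjC ?[adjacent G _ y]adjC => /NC;
           rewrite !inE !eqxx ?orbT => /(_ isT isT) ].
- exact: (C2 p q).
- by apply: (C2 q p) => //; rewrite adjC.
- case: (boolP [exists s in [set x; y; z; w], adjacent G s p || adjacent G s q]).
    case/exists_inP => s sS /orP [sp|sq]; [exact: (C2 s p) | exact: (C2 s q)].
  rewrite negb_exists_in => /forall_inP hn.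
  have hw := hn w; have hy := hn y.
  rewrite !inE !eqxx ?orbT /= negb_or in hw.
  rewrite !inE !eqxx ?orbT /= negb_or in hy.
  move/(_ isT): hw => /andP [nwp _]; move/(_ isT): hy => /andP [_ nyq].
  move: pS qS; rewrite !inE !negb_or => /andP [/andP [/andP [px py] pz] pw].
  move=> /andP [/andP [/andP [qx qy] qz] qw].
  have [npq _ _] := adjE wf pq.
  apply: (@L6 _ _ y x z w p q wf) => //; first by rewrite adjC.
  all: by rewrite // eq_sym.
Qed.

Lemma M1 (T : finType) (G : sgraph T) x y z : wf_graph G ->
  adjacent G x y -> z \in nonisolated G -> z != x -> z != y ->
  ~~ adjacent G z x -> ~~ adjacent G z y -> 2 < #|edges G| -> K3 G.
Proof.
move=> wf xy zn zx zy nzx nzy c3.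
have [nxy xV yV] := adjE wf xy.
move: zn; rewrite inE => /andP [zV /exists_inP [e he ze]].
have [p [q [ee pq]]] := edgeE wf he; subst e.
have [w zw] : exists w, adjacent G z w.
  move: ze; rewrite !inE => /orP [] /eqP ->; first by exists q.
  by exists p; rewrite adjC.
have [nzw _ wV] := adjE wf zw.
have wx : w != x by apply: contraNneq nzx => <-.
have wy : w != y by apply: contraNneq nzy => <-.
case: (boolP (adjacent G w x)) => wxA.
  have yz : y != z by rewrite eq_sym.
  have nyz : ~~ adjacent G y z by rewrite adjC.
  have st := PS_ident yV zV yz nyz.
  apply: (K3_step st); apply: (@fin _ _ y x w (step_wf wf st)).
  - by apply: id_keep; rewrite 1?adjC // eq_sym.
  - by apply: id_keep; rewrite 1?adjC // eq_sym.
  - exact: id_new.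
case: (boolP (adjacent G w y)) => wyA.
  have xz : x != z by rewrite eq_sym.
  have nxz : ~~ adjacent G x z by rewrite adjC.
  have st := PS_ident xV zV xz nxz.
  apply: (K3_step st); apply: (@fin _ _ x y w (step_wf wf st)).
  - by apply: id_keep; rewrite // eq_sym.
  - by apply: id_keep; rewrite 1?adjC // eq_sym.
  - exact: id_new.
have : ~~ (edges G \subset [set [set x; y]; [set z; w]]).
  apply/negP => sub; have := subset_leq_card sub; rewrite cards2.
  by move=> h; have := leq_trans c3 h; case: (_ != _).
case/subsetPn => e3 he3; rewrite !inE negb_or => /andP [e1 e2].
apply: (@M2 _ _ x y z w e3 wf) => //; rewrite 1?adjC 1?eq_sym //.
Qed.

Theorem lemma1p13 (T : finType) (H : sgraph T) :
  wf_graph H -> ~ trivial_pattern H ->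
  exists H' : sgraph T, projection H H' /\ is_triangle H'.
Proof.
move=> wf ntp.
have c3 : 2 < #|edges H| by rewrite ltnNge; apply/negP => h; apply: ntp; right.
apply: NNPP => nK; apply: ntp; left.
have NT : forall a b c, adjacent H a b -> adjacent H b c -> adjacent H a c -> False.
  by move=> a b c ab bc ac; apply: nK; exact: (fin wf ab bc ac).
have NK : forall x y z, adjacent H x y -> z \in nonisolated H -> z != x -> z != y ->
    adjacent H z x || adjacent H z y.
  move=> x y z xy zn zx zy; case: (boolP (adjacent H z x || adjacent H z y)) => //.
  rewrite negb_or => /andP [h1 h2].
  by exfalso; apply: nK; exact: (M1 wf xy zn zx zy h1 h2 c3).
have nonI : forall a b, adjacent H a b -> a \in nonisolated H.
  move=> a b ab; have [_ aV _] := adjE wf ab.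
  by rewrite inE aV; apply/exists_inP; exists [set a; b]; rewrite // !inE eqxx.
case: (set_0Vmem (edges H)) => [E0 | [e0 he0]].
  exists set0, set0; split.
  - by rewrite disjoints_subset sub0set.
  - apply/setP => x; rewrite setU0 inE; symmetry; apply/negbTE.
    by rewrite inE negb_and; apply/orP; right; apply/exists_inP => -[e]; rewrite E0 inE.
  - rewrite E0; apply/setP => e; rewrite inE; symmetry; apply/negbTE.
    by apply/negP => /imset2P [a b]; rewrite inE.
have [x0 [y0 [_ xy0]]] := edgeE wf he0.
exists [set a | adjacent H y0 a], [set b | adjacent H x0 b]; split.
- rewrite disjoints_subset; apply/subsetP => a; rewrite !inE => ya; apply/negP => xa.
  by apply: (NT x0 y0 a).
- have memA : forall z, (z \in [set a | adjacent H y0 a]) = adjacent H y0 z by move=> z; rewrite inE.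
  have memB : forall z, (z \in [set a | adjacent H x0 a]) = adjacent H x0 z by move=> z; rewrite inE.
  apply/setP => z; rewrite in_setU memA memB; apply/idP/idP.
    case/orP => h; apply: nonI; rewrite adjC; exact: h.
  move=> zn; case: (eqVneq z x0) => [->|zx]; first by rewrite adjC xy0.
  case: (eqVneq z y0) => [->|zy]; first by rewrite xy0 orbT.
  by case/orP: (NK _ _ _ xy0 zn zx zy) => h; rewrite ![adjacent H _ z]adjC h ?orbT.
- apply/setP => e; apply/idP/idP.
    move=> he; have [p [q [-> pq]]] := edgeE wf he.
    have pn := nonI _ _ pq; have qn : q \in nonisolated H by apply: (nonI _ p); rewrite adjC.
    have hp : adjacent H y0 p || adjacent H x0 p.
      case: (eqVneq p x0) => [->|px]; first by rewrite adjC xy0.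
      case: (eqVneq p y0) => [->|py]; first by rewrite xy0 orbT.
      by case/orP: (NK _ _ _ xy0 pn px py) => h; rewrite ![adjacent H _ p]adjC h ?orbT.
    have hq : adjacent H y0 q || adjacent H x0 q.
      case: (eqVneq q x0) => [->|qx]; first by rewrite adjC xy0.
      case: (eqVneq q y0) => [->|qy]; first by rewrite xy0 orbT.
      by case/orP: (NK _ _ _ xy0 qn qx qy) => h; rewrite ![adjacent H _ q]adjC h ?orbT.
    case/orP: hp => hp; case/orP: hq => hq.
    + by case: (NT y0 p q).
    + by apply/imset2P; exists p q; rewrite ?inE.
    + by apply/imset2P; exists q p; rewrite ?inE // set2C.
    + by case: (NT x0 p q).
  case/imset2P => a b; rewrite !inE => ya xb ->.
  case: (eqVneq b y0) => [->|by0]; first by rewrite -/(adjacent H a y0) adjC.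
  rewrite -/(adjacent H a b).
  have bn : b \in nonisolated H by apply: (nonI _ x0); rewrite adjC.
  have ba : b != a by apply: contraTneq xb => ->; apply/negP => xa; apply: (NT x0 y0 a).
  have ay : adjacent H a y0 by rewrite adjC.
  case/orP: (NK _ _ _ ay bn ba by0) => h; first by rewrite /adjacent set2C.
  by case: (NT x0 y0 b) => //; rewrite adjC.
Qed.
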